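(* Assume the geometric setup and uniform-amplitude model in the context, with $D_{\rm m}<D_{\rm b}$, $r>d_{\rm Fn}$, and $|\sin(\theta-\psi)|\ge c$ for a constant $c>0$. Let $D_{\rm m}^{\rm eff}=D_{\rm m}|\sin(\theta-\psi)|$. Then $$\|\mathbf{J}_\psi\|_{\mathsf F}^2=\frac{N_{\rm b}N_{\rm m}(D_{\rm m}^{\rm eff})^2}{48r^2}\Big(1+\frac{2}{N_{\rm m}-1}\Big)\big(1+\mathcal{O}(N_{\rm b}^{-1})\big),$$ and consequently, for any full-row-rank $\mathbf{Q}\in\mathbb{C}^{N_{\rm rf}\times N_{\rm b}}$ and $P_{\rm m},\sigma_{\rm o}^2>0$, the average Fisher information $\bar F_\psi=\frac{2P_{\rm m}}{\sigma_{\rm o}^2N_{\rm m}}\|\mathbf{P}_{\mathbf{Q}}\mathbf{J}_\psi\|_{\mathsf F}^2$ satisfies $$\bar F_\psi\le\frac{2P_{\rm m}}{\sigma_{\rm o}^2N_{\rm m}}\|\mathbf{J}_\psi\|_{\mathsf F}^2=\frac{P_{\rm m}N_{\rm b}(D_{\rm m}^{\rm eff})^2}{24\sigma_{\rm o}^2r^2}\Big(1+\frac{2}{N_{\rm m}-1}\Big)\big(1+\mathcal{O}(N_{\rm b}^{-1})\big).$$ Here $\mathcal{O}(N_{\rm b}^{-1})$ denotes a quantity bounded in absolute value by $C/N_{\rm b}$ with $C$ depending only on $c$, uniformly over $\lambda$, $N_{\rm m}$ and poses satisfying the hypotheses.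
   Context: Geometric setup: wavelength $\lambda>0$; BS and MS uniform linear arrays with odd numbers of antennas $N_{\rm b}=2\bar N_{\rm b}+1\ge3$ and $N_{\rm m}=2\bar N_{\rm m}+1\ge3$, spacings $d_{\rm b}=d_{\rm m}=\lambda/2$, apertures $D_{\rm b}=(N_{\rm b}-1)d_{\rm b}$, $D_{\rm m}=(N_{\rm m}-1)d_{\rm m}$. BS antenna $n_{\rm b}\in\{-\bar N_{\rm b},\dots,\bar N_{\rm b}\}$ sits at $(0,n_{\rm b}d_{\rm b})$; for MS pose $(x,y,\psi)$, MS antenna $n_{\rm m}\in\{-\bar N_{\rm m},\dots,\bar N_{\rm m}\}$ sits at $(x+n_{\rm m}d_{\rm m}\cos\psi,\;y+n_{\rm m}d_{\rm m}\sin\psi)$, and $r_{n_{\rm b},n_{\rm m}}=\sqrt{(x+n_{\rm m}d_{\rm m}\cos\psi)^2+(y+n_{\rm m}d_{\rm m}\sin\psi-n_{\rm b}d_{\rm b})^2}$. Let $r=\sqrt{x^2+y^2}>0$ and $\theta$ be the polar angle with $x=r\cos\theta$, $y=r\sin\theta$. Fresnel distance: $d_{\rm Fn}=0.62\sqrt{D_{\rm b}^3/\lambda}$. Uniform-amplitude channel: $\mathbf{H}\in\mathbb{C}^{N_{\rm b}\times N_{\rm m}}$ with rows indexed by $n_{\rm b}$ and columns by $n_{\rm m}$ (both increasing), entries $h_{n_{\rm b},n_{\rm m}}=\frac{\lambda}{4\pi r}e^{-{\rm j}\frac{2\pi}{\lambda}r_{n_{\rm b},n_{\rm m}}}$. Let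 $\eta=-\big(\frac1r+{\rm j}\frac{2\pi}{\lambda}\big)$. The channel derivatives under the uniform-amplitude approximation are the matrices with entries $[\mathbf{J}_x]_{n_{\rm b},n_{\rm m}}=\eta\frac{x+n_{\rm m}d_{\rm m}\cos\psi}{r}h_{n_{\rm b},n_{\rm m}}$, $[\mathbf{J}_y]_{n_{\rm b},n_{\rm m}}=\eta\frac{y+n_{\rm m}d_{\rm m}\sin\psi-n_{\rm b}d_{\rm b}}{r}h_{n_{\rm b},n_{\rm m}}$, and $\mathbf{J}_\psi=-d_{\rm m}\sin\psi\,\mathbf{J}_x\mathbf{D}_{N_{\rm m}}+d_{\rm m}\cos\psi\,\mathbf{J}_y\mathbf{D}_{N_{\rm m}}$, with $\mathbf{D}_{N_{\rm m}}=\mathrm{diag}(-\bar N_{\rm m},\dots,0,\dots,\bar N_{\rm m})$. $\mathbf{P}_{\mathbf{Q}}=\mathbf{Q}^{\mathsf H}(\mathbf{Q}\mathbf{Q}^{\mathsf H})^{-1}\mathbf{Q}$; $\|\cdot\|_{\mathsf F}$ is the Frobenius norm. *)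

(* Defs.v *)
From mathcomp Require Import all_boot all_algebra.
From mathcomp Require Import all_classical all_reals all_analysis.
From mathcomp Require Import complex.
Set Implicit Arguments. Unset Strict Implicit. Unset Printing Implicit Defensive.
Import GRing.Theory Num.Theory.
Local Open Scope ring_scope.
Local Open Scope complex_scope.

Section NearField.
Variable R : realType.

(* number of antennas of a ULA with half-count Nbar : N = 2 Nbar + 1 *)
Definition nant (Nbar : nat) : nat := (2 * Nbar + 1)%N.

(* antenna index n in {-Nbar..Nbar} attached to the matrix index i (increasing) *)
Definition aidx (Nbar : nat) (i : 'I_(nant Nbar)) : R := (i : nat)%:R - Nbar%:R.

Definition spacing (lam : R) : R := lam / 2.
Definition aperture (Nbar : nat) (lam : R) : R :=
  ((nant Nbar)%:R - 1) * spacing lam.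

Definition fresnel (lam Db : R) : R := (62 / 100) * Num.sqrt (Db ^+ 3 / lam).

Definition rpol (x y : R) : R := Num.sqrt (x ^+ 2 + y ^+ 2).

Definition rdist (lam x y psi nb nm : R) : R :=
  Num.sqrt ((x + nm * spacing lam * cos psi) ^+ 2
            + (y + nm * spacing lam * sin psi - nb * spacing lam) ^+ 2).

Definition expj (phi : R) : R[i] := cos phi +i* sin phi.

Definition chanH (lam : R) (Nbb Nmb : nat) (x y psi : R)
  : 'M[R[i]]_(nant Nbb, nant Nmb) :=
  \matrix_(i, j) ((lam / (4 * pi * rpol x y))%:C
      * expj (- (2 * pi / lam) * rdist lam x y psi (aidx i) (aidx j))).

Definition eta (lam r : R) : R[i] := - ((1 / r)%:C + 'i * (2 * pi / lam)%:C).

Definition Jx (lam : R) (Nbb Nmb : nat) (x y psi : R)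
  : 'M[R[i]]_(nant Nbb, nant Nmb) :=
  \matrix_(i, j) (eta lam (rpol x y)
      * ((x + aidx j * spacing lam * cos psi) / rpol x y)%:C
      * chanH lam Nbb Nmb x y psi i j).

Definition Jy (lam : R) (Nbb Nmb : nat) (x y psi : R)
  : 'M[R[i]]_(nant Nbb, nant Nmb) :=
  \matrix_(i, j) (eta lam (rpol x y)
      * ((y + aidx j * spacing lam * sin psi - aidx i * spacing lam) / rpol x y)%:C
      * chanH lam Nbb Nmb x y psi i j).

Definition Dmat (Nmb : nat) : 'M[R[i]]_(nant Nmb) :=
  diag_mx (\row_j (aidx j)%:C).

Definition Jpsi (lam : R) (Nbb Nmb : nat) (x y psi : R)
  : 'M[R[i]]_(nant Nbb, nant Nmb) :=
  (- spacing lam * sin psi)%:C *: (Jx lam Nbb Nmb x y psi *m Dmat Nmb)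
  + (spacing lam * cos psi)%:C *: (Jy lam Nbb Nmb x y psi *m Dmat Nmb).

Definition frob2 (m n : nat) (A : 'M[R[i]]_(m, n)) : R :=
  \sum_(i < m) \sum_(j < n) (@complex.Re R (A i j) ^+ 2 + @complex.Im R (A i j) ^+ 2).

Definition ctrmx (m n : nat) (A : 'M[R[i]]_(m, n)) : 'M[R[i]]_(n, m) :=
  (map_mx conjc A)^T.

Definition projQ (m n : nat) (Q : 'M[R[i]]_(m, n)) : 'M[R[i]]_n :=
  ctrmx Q *m invmx (Q *m ctrmx Q) *m Q.

Definition Fbar (Pm s2 : R) (Nrf Nb Nm : nat) (Q : 'M[R[i]]_(Nrf, Nb))
  (J : 'M[R[i]]_(Nb, Nm)) : R :=
  2 * Pm / (s2 * Nm%:R) * frob2 (projQ Q *m J).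

End NearField.

(* Main.v *)
Require Import Defs.
From mathcomp Require Import all_boot all_algebra.
From mathcomp Require Import all_classical all_reals all_analysis.
From mathcomp Require Import complex.
From mathcomp Require Import ring lra.
Import GRing.Theory Num.Theory.
Local Open Scope ring_scope.
Local Open Scope complex_scope.

Section Proj.
Variable R : realType.

Definition nsq (z : R[i]) : R := complex.Re z ^+ 2 + complex.Im z ^+ 2.

Lemma mulJ (z : R[i]) : conjc z * z = (nsq z)%:C.
Proof.
case: z => a b; rewrite /nsq /=; apply/eqP; rewrite eq_complex /=.
apply/andP; split; apply/eqP; ring.
Qed.

Lemma nsq_ge0 z : 0 <= nsq z.
Proof. by rewrite /nsq addr_ge0 // sqr_ge0. Qed.

Lemma ctrmxE m n (A : 'M[R[i]]_(m, n)) i j : ctrmx A i j = conjc (A j i).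
Proof. by rewrite /ctrmx !mxE. Qed.

Lemma ctrmxM m n p (A : 'M[R[i]]_(m, n)) (B : 'M[R[i]]_(n, p)) :
  ctrmx (A *m B) = ctrmx B *m ctrmx A.
Proof. by rewrite /ctrmx map_mxM trmx_mul. Qed.

Lemma ctrmxD m n (A B : 'M[R[i]]_(m, n)) : ctrmx (A + B) = ctrmx A + ctrmx B.
Proof. by rewrite /ctrmx map_mxD linearD. Qed.

Lemma ctrmxB m n (A B : 'M[R[i]]_(m, n)) : ctrmx (A - B) = ctrmx A - ctrmx B.
Proof. by rewrite /ctrmx map_mxB linearB. Qed.

Lemma ctrmx1 n : ctrmx (1%:M : 'M[R[i]]_n) = 1%:M.
Proof. by rewrite /ctrmx map_mx1 trmx1. Qed.

Lemma ctrmxK m n (A : 'M[R[i]]_(m, n)) : ctrmx (ctrmx A) = A.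
Proof. by apply/matrixP=> i j; rewrite !ctrmxE conjcK. Qed.

Lemma tr_frob m n (A : 'M[R[i]]_(m, n)) : \tr (ctrmx A *m A) = (frob2 A)%:C.
Proof.
rewrite /mxtrace /frob2 exchange_big /= rmorph_sum /=.
apply: eq_bigr => j _; rewrite mxE rmorph_sum /=; apply: eq_bigr => i _.
by rewrite ctrmxE mulJ.
Qed.

Lemma frob2_ge0 m n (A : 'M[R[i]]_(m, n)) : 0 <= frob2 A.
Proof.
by apply: sumr_ge0 => i _; apply: sumr_ge0 => j _; apply: (nsq_ge0 (A i j)).
Qed.

Lemma frob_split n p (P : 'M[R[i]]_n) (J : 'M[R[i]]_(n, p)) :
  ctrmx P = P -> P *m P = P ->
  frob2 J = frob2 (P *m J) + frob2 ((1%:M - P) *m J).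
Proof.
move=> hP pP; apply: complexI; rewrite rmorphD /= -!tr_frob.
have hJ : J = P *m J + (1%:M - P) *m J by rewrite -mulmxDl addrC subrK mul1mx.
have e1 : ctrmx (P *m J) *m ((1%:M - P) *m J) = 0.
  rewrite ctrmxM hP -mulmxA (mulmxA P) mulmxBr mulmx1 pP subrr mul0mx mulmx0 //.
have e2 : ctrmx ((1%:M - P) *m J) *m (P *m J) = 0.
  rewrite ctrmxM ctrmxB ctrmx1 hP -mulmxA (mulmxA (1%:M - P)) mulmxBl mul1mx pP
    subrr mul0mx mulmx0 //.
rewrite {1 2}hJ; move: e1 e2; set A := P *m J; set B := (1%:M - P) *m J => e1 e2.
by rewrite ctrmxD mulmxDl !mulmxDr e1 e2 addr0 add0r mxtraceD.
Qed.

Lemma Gunit m n (Q : 'M[R[i]]_(m, n)) : row_free Q -> Q *m ctrmx Q \in unitmx.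
Proof.
move=> hQ; rewrite -row_free_unit; apply: inj_row_free => v hv.
have h0 : (v *m Q) *m ctrmx (v *m Q) = 0.
  by rewrite ctrmxM mulmxA -(mulmxA v) hv mul0mx.
have : v *m Q = 0.
  move: h0; set w := v *m Q => h0; clearbody w.
  have hf : frob2 (ctrmx w) = 0.
    by apply: complexI; rewrite -tr_frob ctrmxK h0 mxtrace0.
  have hs : forall i j, nsq (ctrmx w i j) = 0.
    move=> i j; move/eqP: hf; rewrite /frob2 psumr_eq0; last first.
      by move=> k _; apply: sumr_ge0 => l _; apply: nsq_ge0.
    move/allP/(_ i (mem_index_enum _)) => /=.
    rewrite psumr_eq0; last by move=> l _; apply: nsq_ge0.
    by move/allP/(_ j (mem_index_enum _)) => /= /eqP.
  apply/matrixP => a b; have := hs b a; rewrite ctrmxE /nsq (_ : (0 : 'M[R[i]]_(1,n)) a b = 0) ?mxE //.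
  case: (w a b) => re im /= /eqP.
  rewrite sqrrN paddr_eq0 ?sqr_ge0 // !sqrf_eq0 => /andP[/eqP -> /eqP ->].
  by [].
by move/eqP; rewrite mulmx_free_eq0 // => /eqP.
Qed.

Lemma projQ_herm m n (Q : 'M[R[i]]_(m, n)) : row_free Q -> ctrmx (projQ Q) = projQ Q.
Proof.
move=> hQ; rewrite /projQ !ctrmxM ctrmxK mulmxA.
have -> : ctrmx (invmx (Q *m ctrmx Q)) = invmx (Q *m ctrmx Q).
  by rewrite {1}/ctrmx map_invmx trmx_inv -/(ctrmx _) ctrmxM ctrmxK.
by [].
Qed.

Lemma projQ_idem m n (Q : 'M[R[i]]_(m, n)) : row_free Q -> projQ Q *m projQ Q = projQ Q.
Proof.
move=> hQ; rewrite /projQ -!mulmxA (mulmxA Q (ctrmx Q)) (mulmxA (invmx _)).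
by rewrite mulVmx ?Gunit // mul1mx.
Qed.

Lemma frob_proj m n p (Q : 'M[R[i]]_(m, n)) (J : 'M[R[i]]_(n, p)) :
  row_free Q -> frob2 (projQ Q *m J) <= frob2 J.
Proof.
move=> hQ; rewrite [X in _ <= X](frob_split _ _ (projQ Q) J (projQ_herm _ _ _ hQ) (projQ_idem _ _ _ hQ)).
by rewrite lerDl frob2_ge0.
Qed.
Lemma nsqM (z w : R[i]) : nsq (z * w) = nsq z * nsq w.
Proof. case: z => a b; case: w => c d; rewrite /nsq /=; ring. Qed.

Lemma nsqC (t : R) : nsq t%:C = t ^+ 2.
Proof. by rewrite /nsq /= expr0n addr0. Qed.

Lemma nsq_expj (t : R) : nsq (expj t) = 1.
Proof. by rewrite /nsq /= cos2Dsin2. Qed.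

Lemma nsq_eta (lam r : R) : nsq (eta lam r) = (1 / r) ^+ 2 + (2 * pi / lam) ^+ 2.
Proof. rewrite /nsq /eta /=; ring. Qed.

Lemma Jpsi_entry (lam : R) Nbb Nmb (x y psi : R) i j :
  Jpsi lam Nbb Nmb x y psi i j =
  eta lam (rpol x y) * chanH lam Nbb Nmb x y psi i j *
  (aidx R j * spacing lam * (y * cos psi - x * sin psi - aidx R i * spacing lam * cos psi)
    / rpol x y)%:C.
Proof.
rewrite /Jpsi /Dmat !mul_mx_diag !mxE.
rewrite !(rmorphM, rmorphD, rmorphB, rmorphN) /=.
rewrite !fmorphV /=. ring.
Qed.

Lemma sum_nat1 n : 2 * \sum_(i < n) (i%:R : R) = n%:R * (n%:R - 1).
Proof.
elim: n => [|n IH]; first by rewrite big_ord0; ring.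
by rewrite big_ord_recr /= mulrDr IH -addn1 natrD; ring.
Qed.

Lemma sum_nat2 n : 6 * \sum_(i < n) (i%:R : R) ^+ 2 = n%:R * (n%:R - 1) * (2 * n%:R - 1).
Proof.
elim: n => [|n IH]; first by rewrite big_ord0; ring.
by rewrite big_ord_recr /= mulrDr IH -addn1 natrD; ring.
Qed.

Lemma nantE N : (nant N)%:R = 2 * N%:R + 1 :> R.
Proof. by rewrite /nant natrD natrM. Qed.

Lemma sum_aidx N : \sum_(i < nant N) aidx R i = 0.
Proof.
rewrite /aidx sumrB sumr_const card_ord.
have h := sum_nat1 (nant N); rewrite nantE in h.
have -> : \sum_(i < nant N) (i%:R : R) = (2 * N%:R + 1) * N%:R.
  apply: (mulfI (x := 2)); first by rewrite pnatr_eq0.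
  by rewrite h; ring.
by rewrite -[N%:R *+ _]mulr_natr nantE; ring.
Qed.

Lemma sum_aidx2 N : 3 * \sum_(i < nant N) aidx R i ^+ 2
  = N%:R * (N%:R + 1) * (2 * N%:R + 1).
Proof.
have e : forall i : 'I_(nant N), aidx R i ^+ 2 =
    (i%:R : R) ^+ 2 + (- 2 * N%:R) * i%:R + N%:R ^+ 2.
  by move=> i; rewrite /aidx; ring.
rewrite (eq_bigr _ (fun i _ => e i)) !big_split /= sumr_const card_ord -mulr_sumr.
have h1 := sum_nat1 (nant N); have h2 := sum_nat2 (nant N).
rewrite nantE in h1 h2.
set S1 := \sum_(i < nant N) (i%:R : R) in h1 *.
set S2 := \sum_(i < nant N) (i%:R : R) ^+ 2 in h2 *.
have -> : S1 = (2 * N%:R + 1) * N%:R.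
  apply: (mulfI (x := 2)); first by rewrite pnatr_eq0.
  by rewrite h1; ring.
have -> : S2 = (2 * N%:R + 1) * (2 * N%:R) * (4 * N%:R + 1) / 6.
  apply: (mulfI (x := 6)); first by rewrite pnatr_eq0.
  by rewrite h2; field.
by rewrite -[_ *+ nant N]mulr_natr nantE; field.
Qed.

Lemma sum_sq_shift N (W e : R) : \sum_(i < nant N) (W - aidx R i * e) ^+ 2
  = (nant N)%:R * W ^+ 2 + e ^+ 2 * \sum_(i < nant N) aidx R i ^+ 2.
Proof.
have ee : forall i : 'I_(nant N), (W - aidx R i * e) ^+ 2 =
    W ^+ 2 + (- 2 * W * e) * aidx R i + e ^+ 2 * aidx R i ^+ 2.
  by move=> i; ring.
rewrite (eq_bigr _ (fun i _ => ee i)) !big_split /= sumr_const card_ord -!mulr_sumr.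
by rewrite sum_aidx mulr0 addr0 mulr_natl.
Qed.

Lemma frob2_Jpsi (lam : R) Nbb Nmb (x y psi : R) :
  frob2 (Jpsi lam Nbb Nmb x y psi) =
  (nsq (eta lam (rpol x y)) * (lam / (4 * pi * rpol x y)) ^+ 2
     * (spacing lam / rpol x y) ^+ 2)
  * (((nant Nbb)%:R * (y * cos psi - x * sin psi) ^+ 2
       + (spacing lam * cos psi) ^+ 2 * \sum_(i < nant Nbb) aidx R i ^+ 2)
     * \sum_(j < nant Nmb) aidx R j ^+ 2).
Proof.
pose K := nsq (eta lam (rpol x y)) * (lam / (4 * pi * rpol x y)) ^+ 2 * (spacing lam / rpol x y) ^+ 2.
rewrite -/K.
rewrite /frob2.
transitivity (\sum_(i < nant Nbb) \sum_(j < nant Nmb)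
   K * ((y * cos psi - x * sin psi - aidx R i * (spacing lam * cos psi)) ^+ 2
        * aidx R j ^+ 2)).
  apply: eq_bigr => i _; apply: eq_bigr => j _.
  rewrite -/(nsq _) Jpsi_entry !nsqM nsqC /chanH mxE nsqM nsqC nsq_expj /K; ring.
under eq_bigr do rewrite -mulr_sumr -mulr_sumr.
by rewrite -mulr_sumr -mulr_suml sum_sq_shift.
Qed.
End Proj.


Theorem proposition4 (R : realType) (c : R) (hc : 0 < c) :
  exists C : R, forall (lam : R) (Nbb Nmb : nat) (x y theta psi : R),
    0 < lam -> (1 <= Nbb)%N -> (1 <= Nmb)%N ->
    0 < rpol x y ->
    x = rpol x y * cos theta -> y = rpol x y * sin theta ->
    aperture Nmb lam < aperture Nbb lam ->
    fresnel lam (aperture Nbb lam) < rpol x y ->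
    c <= `|sin (theta - psi)| ->
    let r := rpol x y in
    let Nb : R := (nant Nbb)%:R in
    let Nm : R := (nant Nmb)%:R in
    let Deff := aperture Nmb lam * `|sin (theta - psi)| in
    exists eps : R,
      `|eps| <= C / Nb /\
      frob2 (Jpsi lam Nbb Nmb x y psi)
        = Nb * Nm * Deff ^+ 2 / (48 * r ^+ 2) * (1 + 2 / (Nm - 1)) * (1 + eps) /\
      (forall (Nrf : nat) (Q : 'M[R[i]]_(Nrf, nant Nbb)) (Pm s2 : R),
         row_free Q -> 0 < Pm -> 0 < s2 ->
         Fbar Pm s2 Q (Jpsi lam Nbb Nmb x y psi)
           <= 2 * Pm / (s2 * Nm) * frob2 (Jpsi lam Nbb Nmb x y psi) /\
         2 * Pm / (s2 * Nm) * frob2 (Jpsi lam Nbb Nmb x y psi)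
           = Pm * Nb * Deff ^+ 2 / (24 * s2 * r ^+ 2) * (1 + 2 / (Nm - 1)) * (1 + eps)).
Proof.
exists (3 * (1 + 2 / c ^+ 2)).
move=> lam Nbb Nmb x y theta psi hlam hNbb hNmb hr hx hy _ hfr hsc r Nb Nm Deff.
have hW : y * cos psi - x * sin psi = r * sin (theta - psi).
  by rewrite /r {1}hx {1}hy sinB; ring.
set s := sin (theta - psi) in hsc Deff hW *.
set N : R := Nbb%:R. set M : R := Nmb%:R.
have hN1 : 1 <= N by rewrite /N ler1n.
have hM1 : 1 <= M by rewrite /M ler1n.
have hNb : Nb = 2 * N + 1 by rewrite /Nb nantE.
have hNm : Nm = 2 * M + 1 by rewrite /Nm nantE.
have hSb : \sum_(i < nant Nbb) aidx R i ^+ 2 = N * (N + 1) * (2 * N + 1) / 3.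
  by rewrite -(sum_aidx2 R Nbb); field.
have hSm : \sum_(i < nant Nmb) aidx R i ^+ 2 = M * (M + 1) * (2 * M + 1) / 3.
  by rewrite -(sum_aidx2 R Nmb); field.
have hs2 : c ^+ 2 <= s ^+ 2.
  by rewrite -(real_normK (num_real s)); nra.
have hpi : 2 <= (pi : R) by apply: pi_ge2.
have hfro := frob2_Jpsi R lam Nbb Nmb x y psi.
rewrite hW hSb hSm nsq_eta -/r in hfro.
set A := lam ^+ 2 / (4 * pi ^+ 2 * r ^+ 2).
set B := (spacing lam * cos psi) ^+ 2 * (N * (N + 1) * (2 * N + 1) / 3)
          / (Nb * r ^+ 2 * s ^+ 2).
have hmain : frob2 (Jpsi lam Nbb Nmb x y psi)
    = Nb * Nm * Deff ^+ 2 / (48 * r ^+ 2) * (1 + 2 / (Nm - 1)) * (1 + (A + B + A * B)).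
  have hs0 : s != 0 by rewrite -normr_gt0; lra.
  have hr0 : r != 0 by rewrite lt0r_neq0.
  have hN0 : 2 * N + 1 != 0 by rewrite lt0r_neq0 //; lra.
  have hM0 : 2 * M + 1 - 1 != 0 by rewrite lt0r_neq0 //; lra.
  have hl0 : lam != 0 by rewrite lt0r_neq0.
  have hp0 : (pi : R) != 0 by rewrite lt0r_neq0 //; lra.
  rewrite hfro /Deff /A /B (exprMn _ (aperture Nmb lam)) real_normK ?num_real // /aperture -/Nm -/Nb hNb hNm /spacing.
  move: hp0; rewrite /A; generalize (pi : R) => p hp0.
  by field; rewrite hs0 hr0 hN0 hM0 hl0 hp0.
have hrp : 0 < r := hr.
have hNbp : 0 < Nb by rewrite hNb; lra.
have hr2 : 0 < r ^+ 2 by rewrite exprn_gt0.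
have hl2 : 0 < lam ^+ 2 by rewrite exprn_gt0.
have hD : aperture Nbb lam = N * lam.
  by rewrite /aperture /spacing -/Nb hNb; field.
have ht : (62 / 100) ^+ 2 * (N ^+ 3 * lam ^+ 2) < r ^+ 2.
  have hf0 : 0 <= fresnel lam (aperture Nbb lam).
    by rewrite /fresnel mulr_ge0 ?sqrtr_ge0 //.
  have hf2 : fresnel lam (aperture Nbb lam) ^+ 2 = (62 / 100) ^+ 2 * (N ^+ 3 * lam ^+ 2).
    rewrite /fresnel exprMn sqr_sqrtr hD; last first.
      by rewrite divr_ge0 ?exprn_ge0 ?mulr_ge0 //; lra.
    congr (_ * _); field; exact: lt0r_neq0.
  rewrite -hf2 !expr2; exact: ltr_pM.
have hN3 : N <= N ^+ 3 by nra.
have hpi2 : 4 <= (pi : R) ^+ 2.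
  by move: hpi; generalize (pi : R) => p hp; nra.
set p := (pi : R) in A hpi hpi2 hmain hfro *. clearbody p. clear hfro hx hy hW hSb hSm hfr hD.
have hA0 : 0 <= A by rewrite /A divr_ge0 ?exprn_ge0 ?mulr_ge0 //; lra.
have hB0 : 0 <= B.
  rewrite /B; apply: divr_ge0; first apply: mulr_ge0; first exact: sqr_ge0.
    by apply: divr_ge0; [rewrite !mulr_ge0 //; lra | lra].
  by rewrite (mulr_ge0 (mulr_ge0 _ (sqr_ge0 r)) (sqr_ge0 s)) //; lra.
have hAN : A * N <= 1.
  rewrite /A mulrAC ler_pdivrMr; last by rewrite mulr_gt0 // mulr_gt0 //; nra.
  nra.
have hc2 : 0 < c ^+ 2 by rewrite exprn_gt0.
have hcos : cos psi ^+ 2 <= 1.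
  by have := cos2Dsin2 psi; have := sqr_ge0 (sin psi); lra.
have hBN : B * N * c ^+ 2 <= 1.
  have -> : B * N * c ^+ 2 = lam ^+ 2 * N ^+ 2 * (N + 1) * (cos psi ^+ 2 * c ^+ 2)
                               / (12 * r ^+ 2 * s ^+ 2).
    rewrite /B hNb /spacing; field.
    have hs0 : s != 0 by rewrite -normr_gt0; lra.
    by rewrite hs0 lt0r_neq0 //= lt0r_neq0 //; lra.
  have hss : 0 < s ^+ 2 by lra.
  rewrite ler_pdivrMr; last by rewrite mulr_gt0 // mulr_gt0 //; lra.
  have h1 : cos psi ^+ 2 * c ^+ 2 <= s ^+ 2.
    have := sqr_ge0 (cos psi); nra.
  have hu : 0 <= lam ^+ 2 * N ^+ 2 by rewrite mulr_ge0 ?exprn_ge0 //; lra.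
  have h2 : lam ^+ 2 * N ^+ 2 * (N + 1) * (cos psi ^+ 2 * c ^+ 2)
            <= lam ^+ 2 * N ^+ 2 * (N + 1) * s ^+ 2.
    by rewrite ler_wpM2l // mulr_ge0 //; lra.
  have h3 : lam ^+ 2 * N ^+ 2 * (N + 1) <= 2 * (N ^+ 3 * lam ^+ 2).
    have -> : 2 * (N ^+ 3 * lam ^+ 2) = lam ^+ 2 * N ^+ 2 * (2 * N) by ring.
    by rewrite ler_wpM2l //; lra.
  have h4 : 2 * (N ^+ 3 * lam ^+ 2) <= 12 * r ^+ 2 by lra.
  have h5 : lam ^+ 2 * N ^+ 2 * (N + 1) * s ^+ 2 <= 12 * r ^+ 2 * s ^+ 2.
    by apply: ler_wpM2r; [exact: sqr_ge0 | lra].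
  lra.
have hBN' : B * N <= 1 / c ^+ 2.
  by rewrite ler_pdivlMr // mul1r.
exists (A + B + A * B).
have heps0 : 0 <= A + B + A * B.
  by apply: addr_ge0; [apply: addr_ge0 | apply: mulr_ge0].
split.
  rewrite ger0_norm // ler_pdivlMr; last by rewrite hNb; lra.
  have hA1 : A <= 1 by nra.
  have hABN : A * B * N <= B * N by nra.
  have hK : (A + B + A * B) * N <= 1 + 2 / c ^+ 2.
    have -> : 2 / c ^+ 2 = 2 * (1 / c ^+ 2) by rewrite div1r.
    have -> : (A + B + A * B) * N = A * N + B * N + A * B * N by ring.
    lra.
  rewrite hNb; nra.
split; first exact: hmain.
move=> Nrf Q Pm s2 hQ hPm hs2'.
have hNm0 : 0 < Nm by rewrite hNm; lra.
split.
  rewrite /Fbar -/Nm ler_wpM2l ?frob_proj //.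
  by rewrite divr_ge0 ?mulr_ge0 //; lra.
rewrite hmain; field.
by rewrite !lt0r_neq0 //; lra.
Qed.
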